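(* Let $Q$ be a quiver (with no framing and arbitrary orientation) whose underlying graph is an affine Dynkin graph of type $\widetilde{D}_r$, $\widetilde{E}_6$, $\widetilde{E}_7$ or $\widetilde{E}_8$, let $\beta=(n,\dots,n)$, and put the complete standard filtration at each vertex. Then $\mathbb{C}[\mathfrak{b}^{\oplus Q_1}]^{\mathbb{U}_\beta}\cong\mathbb{C}[\mathfrak{t}^{\oplus Q_1}]$, i.e. the invariant ring is the subalgebra generated by the diagonal entries of the matrices $A_a$, $a\in Q_1$.
   Context: At each vertex put $\mathbb{C}^n$ with flag $0\subset\mathbb{C}^1\subset\cdots\subset\mathbb{C}^n$ (standard coordinate subspaces). Then the filtered representation space is $\mathfrak{b}^{\oplus Q_1}$, tuples $(A_a)_{a\in Q_1}$ of upper triangular $n\times n$ matrices. $\mathbb{U}_\beta=U^{Q_0}$, $U$ the upper unitriangular $n\times n$ matrices, acting by $(u_i)\cdot(A_a)=(u_{h(a)}A_au_{t(a)}^{-1})$ where $h,t$ are head and tail. $\mathfrak{t}$ denotes diagonal matrices. *)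

(* Defs.v *)
From mathcomp Require Import all_boot all_algebra.
From mathcomp Require Import complex.
From mathcomp Require Import Rstruct.
From mathcomp Require Import mpoly.
Set Implicit Arguments. Unset Strict Implicit. Unset Printing Implicit Defensive.
Import GRing.Theory.

Definition CC : Type := complex Rdefinitions.R.

(* D~_r (r >= 4), vertices 0..r: 0,1 attached to 2; chain 2 - 3 - ... - (r-2);
   r-1, r attached to r-2.  Edges listed with i < j. *)
Definition Dt_edge (r i j : nat) : bool :=
  [|| (i <= 1)%N && (j == 2),
      [&& (2 <= i)%N, j == i.+1 & (j <= r - 2)%N]
    | (i == r - 2) && ((j == r - 1) || (j == r))].
Definition Dt_adj (r : nat) (i j : nat) : bool := Dt_edge r i j || Dt_edge r j i.

Definition E6t_edge (i j : nat) : bool :=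
  (i, j) \in [:: (0, 1); (1, 2); (0, 3); (3, 4); (0, 5); (5, 6)]%N.
Definition E6t_adj (i j : nat) : bool := E6t_edge i j || E6t_edge j i.

Definition E7t_edge (i j : nat) : bool :=
  ((j == i.+1) && (j <= 6)%N) || ((i == 3) && (j == 7)).
Definition E7t_adj (i j : nat) : bool := E7t_edge i j || E7t_edge j i.

Definition E8t_edge (i j : nat) : bool :=
  ((j == i.+1) && (j <= 7)%N) || ((i == 2) && (j == 8)).
Definition E8t_adj (i j : nat) : bool := E8t_edge i j || E8t_edge j i.

(** The underlying (multi)graph of the quiver (V, E, t, h) is isomorphic to the
    simple graph on 'I_k with (symmetric, irreflexive) adjacency [adj]: there is
    a bijection on vertices such that the number of arrows between x and y
    (in either direction; loops counted once) is 1 if adjacent and 0 otherwise. *)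
Definition underlying_graph_iso (V E : finType) (t h : E -> V)
    (k : nat) (adj : nat -> nat -> bool) : Prop :=
  exists sigma : V -> 'I_k, bijective sigma /\
    forall x y : V,
      #|[pred a : E | ((t a == x) && (h a == y)) || ((t a == y) && (h a == x))]|
      = nat_of_bool (adj (sigma x) (sigma y)).

Definition affine_DE_quiver (V E : finType) (t h : E -> V) : Prop :=
  [\/ exists r : nat, (4 <= r)%N /\ underlying_graph_iso t h r.+1 (Dt_adj r),
      underlying_graph_iso t h 7 E6t_adj,
      underlying_graph_iso t h 8 E7t_adj
    | underlying_graph_iso t h 9 E8t_adj].

Local Open Scope ring_scope.

Definition upper_tri (n : nat) (A : 'M[CC]_n) : Prop :=
  forall i j : 'I_n, (j < i)%N -> A i j = 0.
Definition unitri (n : nat) (u : 'M[CC]_n) : Prop :=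
  upper_tri u /\ forall i : 'I_n, u i i = 1.

(** * Coordinate ring of b^{⊕ Q_1}
    Coordinates are the entries (a, i, j) with i <= j of the matrices A_a. *)
Definition bcoord (E : finType) (n : nat) : finType :=
  {p : E * 'I_n * 'I_n | (p.1.2 <= p.2)%N}.

Definition bdim (E : finType) (n : nat) : nat := #|bcoord E n|.

Definition bpoly (E : finType) (n : nat) := {mpoly CC[bdim E n]}.

Definition beval (E : finType) (n : nat) (f : bpoly E n) (A : E -> 'M[CC]_n) : CC :=
  f.@[fun k : 'I_(bdim E n) =>
        let p := val (enum_val k) in A p.1.1 p.1.2 p.2].

Definition Uact (V E : finType) (t h : E -> V) (n : nat)
    (u : V -> 'M[CC]_n) (A : E -> 'M[CC]_n) : E -> 'M[CC]_n :=
  fun a => u (h a) *m A a *m invmx (u (t a)).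

Definition U_invariant (V E : finType) (t h : E -> V) (n : nat) (f : bpoly E n) : Prop :=
  forall u : V -> 'M[CC]_n, (forall x, unitri (u x)) ->
  forall A : E -> 'M[CC]_n, (forall a, upper_tri (A a)) ->
    beval f (Uact t h u A) = beval f A.

Definition diag_var (E : finType) (n : nat) (p : E * 'I_n) : bpoly E n :=
  'X_(enum_rank (exist (fun q : E * 'I_n * 'I_n => (q.1.2 <= q.2)%N)
                       (p.1, p.2, p.2) (leqnn p.2))).

Definition ddim (E : finType) (n : nat) : nat := #|{: E * 'I_n}|.

Definition diag_vars (E : finType) (n : nat) : (ddim E n).-tuple (bpoly E n) :=
  [tuple diag_var (enum_val k) | k < ddim E n].

Definition in_diag_subalg (E : finType) (n : nat) (f : bpoly E n) : Prop :=
  exists g : {mpoly CC[ddim E n]}, f = comp_mpoly (diag_vars E n) g.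

(* Main.v *)
Require Import Defs.
From mathcomp Require Import all_boot all_algebra.
From mathcomp Require Import complex Rstruct mpoly.
From mathcomp Require Import zify.
Set Implicit Arguments. Unset Strict Implicit. Unset Printing Implicit Defensive.
Import GRing.Theory Num.Theory.
Local Open Scope ring_scope.

Local Notation widen := (widen_ord (leqnSn _)).
Section Vanish.
Variable R : numDomainType.

Lemma mpoly0_const (p : {mpoly R[0]}) : p = (p@_0)%:MP.
Proof.
apply/mpolyP=> m.
have -> : m = 0%MM by apply/mnmP=> -[].
by rewrite mcoeffC eqxx mulr1.
Qed.

Definition mres n (m : 'X_{1..n.+1}) : 'X_{1..n} := [multinom m (widen i) | i < n].

Lemma mres_inj n (m1 m2 : 'X_{1..n.+1}) :
  mres m1 = mres m2 -> m1 ord_max = m2 ord_max -> m1 = m2.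
Proof.
move=> /mnmP e emax; apply/mnmP=> i.
case: (unliftP ord_max i) => [j ->|->] //.
have := e j; rewrite !mnmE.
by have -> : lift ord_max j = widen j by apply/val_inj; rewrite /= /bump leqNgt ltn_ord.
Qed.

Lemma vanish n (p : {mpoly R[n]}) : (forall v, p.@[v] = 0) -> p = 0.
Proof.
elim: n p => [|n IH] p H.
  rewrite (mpoly0_const p); move: (H (fun _ => 0)).
  by rewrite {1}(mpoly0_const p) mevalC => ->.
pose c (k : nat) : {mpoly R[n]} :=
  \sum_(m <- msupp p | m ord_max == k) p@_m *: 'X_[mres m].
have c0 : forall k, c k = 0.
  move=> k; apply: IH => v.
  pose Q : {poly R} := \sum_(m <- msupp p)
     (p@_m * \prod_(i < n) v i ^+ m (widen i)) *: 'X^(m ord_max).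
  have HQ : Q = 0.
    apply: (@roots_geq_poly_eq0 _ Q [seq i%:R | i <- iota 0 (size Q)]).
    - apply/allP=> x _; apply/eqP.
      pose v' (i : 'I_n.+1) : R := if insub (val i) is Some j then v j else x.
      rewrite -(H v') mevalE /Q horner_sum; apply: eq_big_seq => m _.
      rewrite hornerZ hornerXn big_ord_recr /= mulrA; congr (_ * _ * _).
        apply: eq_big => // i _; rewrite /v'.
        by rewrite (insubT (fun k : nat => (k < n)%N) (ltn_ord i)) /=; congr (v _ ^+ _); apply/val_inj.
      by rewrite /v' insubN //= ltnn.
    - rewrite map_inj_uniq ?iota_uniq // => a b /eqP; rewrite eqr_nat => /eqP //.
    - by rewrite size_map size_iota.
  transitivity Q`_k; last by rewrite HQ coef0.
  rewrite /Q coef_sum /c rmorph_sum /= big_mkcond /=.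
  apply: eq_big_seq => m _; rewrite coefZ coefXn eq_sym.
  case: eqP => _; last by rewrite mulr0.
  rewrite mulr1 mevalZ mevalX; congr (_ * _); apply: eq_big => // i _.
  by rewrite mnmE.
apply/mpolyP=> m; rewrite mcoeff0.
have := congr1 (mcoeff (mres m)) (c0 (m ord_max)).
rewrite mcoeff0 /c raddf_sum /=.
case: (boolP (m \in msupp p)) => [mp|]; last by move/memN_msupp_eq0.
rewrite big_mkcond (bigD1_seq m) ?msupp_uniq //= eqxx mcoeffZ mcoeffX eqxx mulr1 big1 ?addr0 //.
move=> m' ne; case: eqP => // e; rewrite mcoeffZ mcoeffX.
case: eqP => [e'|]; last by rewrite mulr0.
by case/eqP: ne; apply: mres_inj.
Qed.
End Vanish.


Section Mat.
Variable n : nat.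
Implicit Types A B : 'M[CC]_n.

Lemma upper_mul A B : upper_tri A -> upper_tri B ->
  upper_tri (A *m B) /\ forall i, (A *m B) i i = A i i * B i i.
Proof.
move=> uA uB; split.
  move=> i j lt_ji; rewrite !mxE big1 // => k _.
  case: (ltnP k i) => [lt_ki|le_ik]; first by rewrite uA // mul0r.
  by rewrite uB ?mulr0 // (leq_trans lt_ji le_ik).
move=> i; rewrite !mxE (bigD1 i) //= big1 ?addr0 // => k ne.
case: (ltngtP k i) => [lt_ki|lt_ik|e]; first by rewrite uA // mul0r.
  by rewrite uB ?mulr0.
by case/eqP: ne; apply/val_inj.
Qed.

Lemma upper_det A : upper_tri A -> \det A = \prod_i A i i.
Proof.
move=> uA; rewrite -det_tr det_trig.
  by apply: eq_bigr => i _; rewrite mxE.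
apply/forallP=> i; apply/forallP=> j; apply/implyP=> lt; rewrite mxE uA //.
Qed.

Lemma upper_unit A : upper_tri A -> (forall i, A i i != 0) -> A \in unitmx.
Proof.
move=> uA nz; rewrite unitmxE upper_det // unitfE; exact/prodf_neq0.
Qed.

Lemma upper_inv A : upper_tri A -> (forall i, A i i != 0) ->
  upper_tri (invmx A) /\ forall i, invmx A i i = (A i i)^-1.
Proof.
move=> uA nz; have Au := upper_unit uA nz.
set B := invmx A.
have BA : B *m A = 1%:M by rewrite mulVmx.
have uB : upper_tri B.
  move=> i j; move: {2}(j : nat) (erefl (j : nat)) i => jn.
  elim/ltn_ind: jn j => jn IH j ej i lt_ji.
  have := congr1 (fun M : 'M[CC]_n => M i j) BA; rewrite !mxE.
  have -> : (i == j) = false.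
    by apply/negbTE; apply/eqP=> e; move: lt_ji; rewrite e ltnn.
  rewrite (bigD1 j) //= big1 ?addr0.
    by move=> /eqP; rewrite mulf_eq0 (negbTE (nz j)) orbF => /eqP.
  move=> k ne; case: (ltngtP k j) => [lt_kj|lt_jk|e].
  - by rewrite (IH k _ k erefl i) ?mul0r // -?ej // (ltn_trans lt_kj).
  - by rewrite uA ?mulr0.
  - by case/eqP: ne; apply/val_inj.
split=> // i; have [_ d] := upper_mul uB uA.
have := d i; rewrite BA mxE eqxx /= => e.
by rewrite -(mulfK (nz i) (B i i)) -e mul1r.
Qed.
End Mat.


Definition Dg n (A : 'M[CC]_n) : 'M[CC]_n := diag_mx (\row_i A i i).

Lemma Dg_upper n (A : 'M[CC]_n) : upper_tri (Dg A).
Proof.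
move=> i j lt; rewrite !mxE; case: eqP => [e|]; last by rewrite mulr0n.
by move: lt; rewrite e ltnn.
Qed.

Lemma Dg_diag n (A : 'M[CC]_n) i : Dg A i i = A i i.
Proof. by rewrite !mxE eqxx mulr1n. Qed.

Lemma unitri1 n : unitri (1%:M : 'M[CC]_n).
Proof.
split; last by move=> i; rewrite mxE eqxx.
move=> i j lt; rewrite mxE; case: eqP => // e; by move: lt; rewrite e ltnn.
Qed.

Lemma unitri_unit n (u : 'M[CC]_n) : unitri u -> u \in unitmx.
Proof. by case=> uu d; apply: upper_unit => // i; rewrite d oner_neq0. Qed.

Definition conn (V E : finType) (t h : E -> V) (par : V -> V) (a : E) (c : V) : bool :=
  ((t a == c) && (h a == par c)) || ((h a == c) && (t a == par c)).

Definition tree_struct (V E : finType) (t h : E -> V) : Prop :=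
  exists (root : V) (par : V -> V) (d : V -> nat),
  [/\ forall v, v != root -> d v = (d (par v)).+1,
      forall a, exists2 c, c != root & conn t h par a c
    & forall a b c, c != root -> conn t h par a c -> conn t h par b c -> a = b].

Lemma tree_diag (V E : finType) (t h : E -> V) n : tree_struct t h ->
  forall A : E -> 'M[CC]_n, (forall a, upper_tri (A a)) -> (forall a i, A a i i != 0) ->
  exists u : V -> 'M[CC]_n, (forall x, unitri (u x)) /\
     forall a, Uact t h u A a = Dg (A a).
Proof.
case=> root [par [d [dE Hc Huniq]]] A uA nzA.
pose step (c : V) (w : 'M[CC]_n) :=
  if [pick a | conn t h par a c] is Some a then
    (if h a == c then Dg (A a) *m w *m invmx (A a)
     else invmx (Dg (A a)) *m w *m A a) else w.
pose ufuel := fix ufuel k v := match k with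
  | 0 => 1%:M | k'.+1 => if v == root then 1%:M else step v (ufuel k' (par v)) end.
pose u v := ufuel (d v) v.
have uE v : v != root -> u v = step v (u (par v)).
  by move=> nv; rewrite /u (dE v nv) /= (negbTE nv).
have uroot : u root = 1%:M by rewrite /u; case: (d root) => //= k; rewrite eqxx.
have parne v : v != root -> par v != v.
  move=> nv; apply/eqP=> e; have := dE v nv; rewrite e => /eqP; by rewrite ltn_eqF.
have DgU a : upper_tri (Dg (A a)) by apply: Dg_upper.
have Dgnz a i : Dg (A a) i i != 0 by rewrite Dg_diag.
have stepU c w : unitri w -> unitri (step c w).
  case=> uw dw; rewrite /step; case: pickP => // a _.
  have [iU iD] := upper_inv (uA a) (nzA a).
  have [jU jD] := upper_inv (DgU a) (Dgnz a).
  case: ifP => _.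
    have [U1 D1] := upper_mul (DgU a) uw; have [U2 D2] := upper_mul U1 iU.
    by split=> // i; rewrite D2 D1 iD dw mulr1 Dg_diag mulfV.
  have [U1 D1] := upper_mul jU uw; have [U2 D2] := upper_mul U1 (uA a).
  by split=> // i; rewrite D2 D1 jD dw mulr1 Dg_diag mulVf.
have uU : forall x, unitri (u x).
  suff H : forall k x, d x = k -> unitri (u x) by move=> x; exact: H _ _ erefl.
  elim=> [|k IH] x dx.
    case: (eqVneq x root) => [->|nx]; first by rewrite uroot; apply: unitri1.
    by move: (dE x nx); rewrite dx.
  case: (eqVneq x root) => [->|nx]; first by rewrite uroot; apply: unitri1.
  by rewrite uE //; apply: stepU; apply: IH; move: (dE x nx); rewrite dx; case=> ->.
exists u; split=> // a.
have [c nc ca] := Hc a.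
have ustep : step c (u (par c)) = (if h a == c then Dg (A a) *m u (par c) *m invmx (A a)
     else invmx (Dg (A a)) *m u (par c) *m A a).
  rewrite /step; case: pickP => [b cb|none]; last by move: (none a); rewrite ca.
  by rewrite (Huniq b a c).
have Au := upper_unit (uA a) (nzA a).
have Du := upper_unit (DgU a) (Dgnz a).
have upU := unitri_unit (uU (par c)).
rewrite /Uact; move: ca; rewrite /conn => /orP[/andP[/eqP ta /eqP ha]|/andP[/eqP ha /eqP ta]].
  rewrite ta ha (uE c nc) ustep ha (negbTE (parne c nc)).
  set Y := invmx (Dg (A a)) *m u (par c) *m A a.
  have Yu : Y \in unitmx by rewrite !unitmx_mul unitmx_inv Du upU Au.
  have -> : u (par c) *m A a = Dg (A a) *m Y by rewrite /Y !mulmxA mulmxV // mul1mx.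
  by rewrite -mulmxA mulmxV // mulmx1.
rewrite ha ta (uE c nc) ustep ha eqxx.
by rewrite -!mulmxA mulKmx // mulmxV ?mulmx1.
Qed.


Lemma iso_tree (V E : finType) (t h : E -> V) k (adj : nat -> nat -> bool) (rootN : nat) (parN dN : nat -> nat) :
  underlying_graph_iso t h k adj -> (rootN < k)%N ->
  (forall i : 'I_k, (i != rootN :> nat) -> (parN i < k)%N && (dN i == (dN (parN i)).+1)) ->
  (forall i j : 'I_k, adj i j ->
     ((i != rootN :> nat) && (j == parN i :> nat)) ||
     ((j != rootN :> nat) && (i == parN j :> nat))) ->
  tree_struct t h.
Proof.
move=> [sigma [[g sK gK] Hcnt]] rk H1 H2.
pose r0 : 'I_k := Ordinal rk.
pose par v := g (insubd r0 (parN (sigma v))).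
have spar v : (sigma v != rootN :> nat) -> sigma (par v) = parN (sigma v) :> nat.
  move=> nv; rewrite /par gK val_insubd.
  by case/andP: (H1 _ nv) => ->.
have nroot v : (v != g r0) = (sigma v != rootN :> nat).
  apply/idP/idP => [nv|nv].
    apply: contra nv => /eqP e; apply/eqP; rewrite -[v]sK; congr g; exact/val_inj.
  apply: contra nv => /eqP ->; by rewrite gK.
have parE v w : (sigma v != rootN :> nat) -> (sigma w == parN (sigma v) :> nat) -> w = par v.
  move=> nv /eqP e; rewrite -[w]sK; congr g; apply/val_inj; rewrite /= val_insubd e.
  by case/andP: (H1 _ nv) => ->.
exists (g r0), par, (fun v => dN (sigma v)); split.
- move=> v; rewrite nroot => nv; rewrite (spar v nv).
  by case/andP: (H1 _ nv) => _ /eqP.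
- move=> a.
  have : adj (sigma (t a)) (sigma (h a)).
    have := Hcnt (t a) (h a); case: (adj _ _) => // /card0_eq/(_ a).
    by rewrite !inE !eqxx.
  move/H2 => /orP[/andP[nt e]|/andP[nh e]].
    exists (t a); first by rewrite nroot.
    by rewrite /conn eqxx (parE _ _ nt e) eqxx.
  exists (h a); first by rewrite nroot.
  by rewrite /conn eqxx (parE _ _ nh e) eqxx orbT.
- move=> a b c nc ca cb.
  have : (#|[pred e : E | ((t e == c) && (h e == par c)) || ((t e == par c) && (h e == c))]| <= 1)%N.
    by rewrite Hcnt; case: (adj _ _).
  move/card_le1_eqP => H.
  have Ha : a \in [pred e : E | ((t e == c) && (h e == par c)) || ((t e == par c) && (h e == c))].
    by move: ca; rewrite /conn !inE [(h a == c) && _]andbC.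
  have Hb : b \in [pred e : E | ((t e == c) && (h e == par c)) || ((t e == par c) && (h e == c))].
    by move: cb; rewrite /conn !inE [(h b == c) && _]andbC.
  by rewrite (H _ _ Ha Hb) || rewrite (H _ _ Hb Ha).
Qed.


Local Close Scope ring_scope.

Lemma check2 k (P : nat -> nat -> bool) :
  all (fun i => all (fun j => P i j) (iota 0 k)) (iota 0 k) -> forall i j : 'I_k, P i j.
Proof.
move=> /allP H i j; have := H i; rewrite mem_iota add0n ltn_ord => /(_ isT) /allP.
by apply; rewrite mem_iota add0n ltn_ord.
Qed.

Lemma check1 k (P : nat -> bool) : all P (iota 0 k) -> forall i : 'I_k, P i.
Proof. by move=> /allP H i; apply: H; rewrite mem_iota add0n ltn_ord. Qed.

Lemma finite_tree (V E : finType) (t h : E -> V) k (adj : nat -> nat -> bool)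
  (parN dN : nat -> nat) :
  underlying_graph_iso t h k adj -> (0 < k)%N ->
  all (fun i => (i != 0) ==> (parN i < k)%N && (dN i == (dN (parN i)).+1)) (iota 0 k) ->
  all (fun i => all (fun j => adj i j ==>
     ((i != 0) && (j == parN i)) || ((j != 0) && (i == parN j))) (iota 0 k)) (iota 0 k) ->
  tree_struct t h.
Proof.
move=> iso k0 c1 c2; apply: (iso_tree (rootN := 0) (parN := parN) (dN := dN) iso k0).
  by move=> i ne; have := check1 c1 i; rewrite ne.
by move=> i j a; have := check2 c2 i j; rewrite a.
Qed.

Definition pE6 (i : nat) : nat := match i with 2 => 1 | 4 => 3 | 6 => 5 | _ => 0 end.
Definition dE6 (i : nat) : nat := match i with 0 => 0 | 1 | 3 | 5 => 1 | _ => 2 end.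
Definition pE7 (i : nat) : nat := if i == 7 then 3 else i.-1.
Definition dE7 (i : nat) : nat := if i == 7 then 4 else i.
Definition pE8 (i : nat) : nat := if i == 8 then 2 else i.-1.
Definition dE8 (i : nat) : nat := if i == 8 then 3 else i.

Definition pD (r i : nat) : nat := if (i <= 1)%N then 2 else if (i <= r - 2)%N then i - 1 else r - 2.
Definition dD (r i : nat) : nat := if (i <= 1)%N then 1 else if (i <= r - 2)%N then i - 2 else r - 3.

Lemma affine_tree (V E : finType) (t h : E -> V) : affine_DE_quiver t h -> tree_struct t h.
Proof.
case=> [[r [r4 iso]]|iso|iso|iso].
- apply: (iso_tree iso (_ : 2 < r.+1)%N (parN := pD r) (dN := dD r)); first lia.
    move=> [i /= hi] ne; rewrite /pD /dD.
    case: ifP => h1; first by rewrite (_ : (2 <= 1)%N = false) // (_ : (2 <= r - 2)%N) /=; lia.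
    case: ifP => h2.
      rewrite (_ : (i - 1 <= 1)%N = false); last lia.
      rewrite (_ : (i - 1 <= r - 2)%N); last lia.
      apply/andP; split; lia.
    rewrite (_ : (r - 2 <= 1)%N = false); last lia.
    rewrite (_ : (r - 2 <= r - 2)%N); last lia.
    apply/andP; split; lia.
  move=> [i /= hi] [j /= hj]; rewrite /Dt_adj /Dt_edge /pD => H.
  case: ifP => h1; case: ifP => h2; try case: ifP => h3; try case: ifP => h4; lia.
- by apply: (finite_tree (parN := pE6) (dN := dE6) iso).
- by apply: (finite_tree (parN := pE7) (dN := dE7) iso).
- by apply: (finite_tree (parN := pE8) (dN := dE8) iso).
Qed.


Local Open Scope ring_scope.

Section Main.
Variables (V E : finType) (t h : E -> V) (n : nat).

Definition dcoord (a : E) (i : 'I_n) : bcoord E n :=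
  exist (fun q : E * 'I_n * 'I_n => (q.1.2 <= q.2)%N) (a, i, i) (leqnn i).

Lemma beval_diag (g : {mpoly CC[ddim E n]}) (A : E -> 'M[CC]_n) :
  beval (comp_mpoly (diag_vars E n) g) A =
  g.@[fun i => let p := enum_val i in A p.1 p.2 p.2].
Proof.
rewrite /beval comp_mpoly_meval; apply: meval_eq => i.
rewrite tnth_mktuple /diag_var mevalXU enum_rankK /=.
by [].
Qed.

Lemma diag_inv (f : bpoly E n) : in_diag_subalg f -> U_invariant t h f.
Proof.
case=> g ->; move=> u uu A uA; rewrite !beval_diag; apply: meval_eq => k /=.
set a := (enum_val k).1; set i := (enum_val k).2.
have [U1 D1] := upper_mul (uu (h a)).1 (uA a).
have nz : forall j, u (t a) j j != 0 by move=> j; rewrite (uu (t a)).2 oner_neq0.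
have [iU iD] := upper_inv (uu (t a)).1 nz.
have [U2 D2] := upper_mul U1 iU.
by rewrite /Uact D2 D1 iD !(uu _).2 mul1r invr1 mulr1.
Qed.

Definition Ax (x : 'I_(bdim E n) -> CC) (a : E) : 'M[CC]_n :=
  \matrix_(i, j) (if (insub (a, i, j) : option (bcoord E n)) is Some q
                  then x (enum_rank q) else 0).

Lemma beval_Ax (f : bpoly E n) x : beval f (Ax x) = f.@[x].
Proof.
rewrite /beval; apply: meval_eq => k /=; rewrite mxE.
have -> : ((val (enum_val k)).1.1, (val (enum_val k)).1.2, (val (enum_val k)).2)
   = val (enum_val k) by case: (val (enum_val k)) => [[]].
by rewrite valK enum_valK.
Qed.

Lemma Ax_upper x a : upper_tri (Ax x a).
Proof. by move=> i j lt; rewrite mxE insubN // -ltnNge. Qed.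

Lemma Ax_diag x a i : Ax x a i i = x (enum_rank (dcoord a i)).
Proof.
rewrite mxE; case: insubP => [q _ vq|]; last by rewrite /= leqnn.
by congr (x (enum_rank _)); apply/val_inj.
Qed.

Definition isdiag (k : 'I_(bdim E n)) : bool := (val (enum_val k)).1.2 == (val (enum_val k)).2.

Definition stup : (bdim E n).-tuple {mpoly CC[ddim E n]} :=
  [tuple (if isdiag k then 'X_(enum_rank ((val (enum_val k)).1.1, (val (enum_val k)).1.2))
          else 0) | k < bdim E n].

Definition yof (x : 'I_(bdim E n) -> CC) (k : 'I_(bdim E n)) : CC :=
  if isdiag k then x (enum_rank (dcoord (val (enum_val k)).1.1 (val (enum_val k)).1.2)) else 0.

Lemma comp_eval (f : bpoly E n) x :
  (comp_mpoly (diag_vars E n) (comp_mpoly stup f)).@[x] = f.@[yof x].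
Proof.
rewrite comp_mpoly_meval comp_mpoly_meval; apply: meval_eq => k.
rewrite tnth_mktuple /yof; case: ifP => _; last by rewrite meval0.
rewrite mevalXU tnth_mktuple /diag_var mevalXU enum_rankK.
by [].
Qed.

Lemma Dg_eval (f : bpoly E n) x : beval f (fun a => Dg (Ax x a)) = f.@[yof x].
Proof.
rewrite /beval; apply: meval_eq => k /=; rewrite /yof /isdiag !mxE.
case: eqP => [e|]; last by rewrite mulr0n.
rewrite mulr1n -Ax_diag.
by rewrite mxE.
Qed.

Lemma main_dir (f : bpoly E n) : tree_struct t h -> U_invariant t h f -> in_diag_subalg f.
Proof.
move=> tr Hf; exists (comp_mpoly stup f).
set f' := comp_mpoly _ _.
pose P : bpoly E n := \prod_(k < bdim E n | isdiag k) 'X_k.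
suff : (f - f') * P = 0.
  move/eqP; rewrite mulf_eq0 subr_eq0 => /orP[/eqP //|/eqP P0].
  have := congr1 (meval (fun _ => 1)) P0.
  rewrite meval0 /P rmorph_prod /= big1 => [/eqP|k _]; last by rewrite mevalXU.
  by rewrite oner_eq0.
apply: vanish => x; rewrite mevalM mevalB.
case: (boolP [forall k, isdiag k ==> (x k != 0)]) => [/forallP nz|].
  rewrite comp_eval -(beval_Ax f x).
  have nzA : forall a i, Ax x a i i != 0.
    move=> a i; rewrite Ax_diag; apply: (implyP (nz _)).
    by rewrite /isdiag enum_rankK.
  have [u [uu ue]] := tree_diag tr (Ax_upper x) nzA.
  rewrite -(Hf u uu (Ax x) (Ax_upper x)) -(Dg_eval f x).
  have -> : beval f (Uact t h u (Ax x)) = beval f (fun a => Dg (Ax x a)).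
    by rewrite /beval; apply: meval_eq => k /=; rewrite ue.
  by rewrite subrr mul0r.
rewrite negb_forall => /existsP[k]; rewrite negb_imply negbK => /andP[dk /eqP xk].
rewrite /P rmorph_prod /= (bigD1 k) //= mevalXU xk mul0r mulr0.
by [].
Qed.
End Main.


Theorem mainTheorem3 (V E : finType) (t h : E -> V) (n : nat) :
  affine_DE_quiver t h ->
  forall f : bpoly E n, U_invariant t h f <-> in_diag_subalg f.
Proof.
move=> aff f; split; first exact: (main_dir (affine_tree aff)).
exact: diag_inv.
Qed.
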